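(* Let $G$ be a connected graph and $P$ an isometric path in $G$. If $P$ is bypath-free in $G$, then $P$ is $1$-leisurely-guardable.
   Context: A path $P$ in $G$ is isometric if $d_P(x,y)=d_G(x,y)$ for all $x,y\in V(P)$. For a subgraph $H$ of $G$ and an isometric path $P=v_1\cdots v_k$ in $H$, a bypath of $P$ in $H$ is a path $B=b_1\cdots b_t$ with $t\ge3$, $V(B)\subseteq V(H)$, $b_1=v_i$, $b_t=v_j$ for some $i<j$, $V(B)\cap V(P)=\{v_i,v_j\}$, and such that $v_1\cdots v_ib_2\cdots b_{t-1}v_j\cdots v_k$ is also an isometric path in $H$; $P$ is bypath-free in $H$ if $H$ contains no bypath of $P$. Cops and robber game on $G$: cops choose starting vertices, then the robber; then they alternate turns, each moving pieces to adjacent vertices or staying; capture occurs when a cop occupies the robber's vertex. An isometric (induced) subgraph $H$ is $k$-guardable if $k$ cops have a strategy such that after finitely many moves they are on vertices of $H$, stay in $H$ thereafter, and whenever the robber enters $H$ he is captured by one of them in the next turn. $H$ is $k$-leisurely-guardable if it is $k$-guardable via a $k$-guarding strategy with $k$ cops for which there is an integer $t$ such that in every sequence of $t$ consecutive moves there is a move in which at least one of these cops stays still. *)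

(* Defs.v *)
(* Finite simple graphs as a symmetric
   irreflexive relation e on a finType T. *)
From mathcomp Require Import all_boot.
Set Implicit Arguments.
Unset Strict Implicit.
Unset Printing Implicit Defensive.

Section Defs.
Variables (T : finType) (e : rel T).

(* A walk of length n from x is a sequence s of size n with [path e x s]. *)
Definition is_dist (x y : T) (n : nat) : Prop :=
  (exists s : seq T, [/\ size s = n, path e x s & last x s = y]) /\
  (forall s : seq T, path e x s -> last x s = y -> n <= size s).

Definition isometric_path (P : seq T) : Prop :=
  [/\ P != [::],
      (forall x0, path e (head x0 P) (behead P)), uniq P &
      forall x0 i j, i < size P -> j < size P ->
        is_dist (nth x0 P i) (nth x0 P j) (if i <= j then j - i else i - j)].

(* A bypath of P (in H = G): a path B = v_i b_2 ... b_{t-1} v_j with t >= 3,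
   i < j, interior q = b_2 ... b_{t-1} disjoint from V(P), such that
   v_1 ... v_i b_2 ... b_{t-1} v_j ... v_k is again an isometric path. *)
Definition is_bypath (P : seq T) (i j : nat) (vi vj : T) (q : seq T) : Prop :=
  [/\ i < j, onth P i = Some vi, onth P j = Some vj, q != [::] &
      [/\ uniq q, path e vi (rcons q vj), all (fun x => x \notin P) q &
          isometric_path (take i.+1 P ++ q ++ drop j P)]].

Definition bypath_free (P : seq T) : Prop :=
  ~ exists i j vi vj q, is_bypath P i j vi vj q.

(* A (deterministic, full-information) strategy for k cops: initial positions,
   and a move function from the history [(c_0,r_0); ...; (c_t,r_t)] to the
   new positions c_{t+1}.  Time convention: round 0 = cops place, then robber
   places (r_0); round t+1 = cops move to c_{t+1}, then robber moves to r_{t+1}.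
   Since cops play deterministically, quantifying over all robber position
   sequences r : nat -> T is the same as quantifying over robber strategies. *)
Record cop_strategy (k : nat) := CopStrategy {
  cs_init : {ffun 'I_k -> T};
  cs_move : seq ({ffun 'I_k -> T} * T) -> {ffun 'I_k -> T} }.

Variable k : nat.
Implicit Type s : cop_strategy k.

Fixpoint history s (r : nat -> T) (t : nat) : seq ({ffun 'I_k -> T} * T) :=
  match t with
  | 0 => [:: (cs_init s, r 0)]
  | t'.+1 => let h := history s r t' in rcons h (cs_move s h, r t)
  end.

Definition cop_pos s (r : nat -> T) (t : nat) : {ffun 'I_k -> T} :=
  (last (cs_init s, r 0) (history s r t)).1.

Definition robber_walk (r : nat -> T) : Prop :=
  forall t, r t.+1 = r t \/ e (r t) (r t.+1).

(* capture happens in round t: a cop moves onto the robber, or the robber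
   is on a cop's vertex after his own move *)
Definition caught s (r : nat -> T) (t : nat) : Prop :=
  exists i : 'I_k, cop_pos s r t i = r t \/ (0 < t /\ cop_pos s r t i = r t.-1).

Definition free s (r : nat -> T) (t : nat) : Prop :=
  forall u, u <= t -> ~ caught s r u.

Definition guarding_strategy (H : {set T}) s : Prop :=
  forall r, robber_walk r ->
    (forall t, free s r t -> forall i : 'I_k,
       cop_pos s r t.+1 i = cop_pos s r t i \/ e (cop_pos s r t i) (cop_pos s r t.+1 i)) /\
    exists N, forall t, N <= t -> free s r t ->
      (forall i : 'I_k, cop_pos s r t i \in H) /\
      (r t \in H -> exists i : 'I_k, cop_pos s r t.+1 i = r t).

Definition guardable (H : {set T}) : Prop :=
  exists s, guarding_strategy H s.

(* leisurely: in every tt consecutive cop moves (rounds t0+1 .. t0+tt, the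
   game still running), some cop stays still in some move *)
Definition leisurely_guardable (H : {set T}) : Prop :=
  exists s (tt : nat), guarding_strategy H s /\
    forall r, robber_walk r -> forall t0, free s r (t0 + tt) ->
      exists u, t0 <= u < t0 + tt /\
        exists i : 'I_k, cop_pos s r u.+1 i = cop_pos s r u i.

End Defs.

(* Main.v *)
Require Import Defs.
From mathcomp Require Import all_boot.
From mathcomp Require Import zify.
Set Implicit Arguments. Unset Strict Implicit. Unset Printing Implicit Defensive.

Section Dist.
Variables (T : finType) (e : rel T).
Hypothesis e_sym : symmetric e.
Hypothesis conn : forall x y : T, connect e x y.

Fixpoint reach (n : nat) (x y : T) : bool :=
  if n is n'.+1 then [exists z, e x z && reach n' z y] else x == y.

Lemma reachP n x y : reflect (exists s, [/\ size s = n, path e x s & last x s = y]) (reach n x y).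
Proof.
elim: n x => [|n IH] x /=.
  apply: (iffP eqP) => [->|[s [/size0nil -> _ /= ->]]]; last by [].
  by exists [::].
apply: (iffP existsP) => [[z /andP[exz /IH [s [sz ps ls]]]]|[[|z s] [//= [sz] /andP[exz ps] ls]]].
  by exists (z :: s); split => //=; rewrite ?sz ?exz.
by exists z; rewrite exz /=; apply/IH; exists s.
Qed.

Lemma reach_ex x y : exists n, reach n x y.
Proof.
have /connectP [s ps ls] := conn x y.
by exists (size s); apply/reachP; exists s; split.
Qed.

Definition dist x y := ex_minn (reach_ex x y).

Lemma dist_walk x y : exists s, [/\ size s = dist x y, path e x s & last x s = y].
Proof. rewrite /dist; case: ex_minnP => n /reachP H _; exact H. Qed.

Lemma dist_min x y s : path e x s -> last x s = y -> dist x y <= size s.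
Proof.
move=> ps ls; rewrite /dist; case: ex_minnP => n _ H; apply: H.
by apply/reachP; exists s.
Qed.

Lemma is_dist_dist x y : is_dist e x y (dist x y).
Proof. split; [exact: dist_walk | move=> s; exact: dist_min]. Qed.

Lemma is_dist_eq x y n : is_dist e x y n -> n = dist x y.
Proof.
case=> [[s [<- ps ls]] H]; apply/eqP; rewrite eqn_leq dist_min //=.
have [s' [hs ps' ls']] := dist_walk x y; rewrite -hs andbT; exact: H ps' ls'.
Qed.

Lemma dist0 x : dist x x = 0.
Proof. by apply/eqP; rewrite -leqn0; apply: (@dist_min x x [::]). Qed.

Lemma dist0_eq x y : dist x y = 0 -> x = y.
Proof. by have [s [<- _ <-]] := dist_walk x y; move/size0nil ->. Qed.

Lemma dist_tri x y z : dist x z <= dist x y + dist y z.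
Proof.
have [s1 [<- p1 l1]] := dist_walk x y; have [s2 [<- p2 l2]] := dist_walk y z.
rewrite -size_cat; apply: dist_min; first by rewrite cat_path p1 l1.
by rewrite last_cat l1.
Qed.

Lemma dist_edge_r x y z : e y z -> dist x z <= dist x y + 1.
Proof.
move=> eyz; have [s [<- p l]] := dist_walk x y.
rewrite addn1 -(size_rcons s z); apply: dist_min; first by rewrite rcons_path p l eyz.
by rewrite last_rcons.
Qed.

Lemma dist_edge_l x y z : e x y -> dist x z <= dist y z + 1.
Proof.
move=> exy; have [s [<- p l]] := dist_walk y z.
rewrite addn1 -[_.+1]/(size (y :: s)); apply: dist_min => /=; first by rewrite exy p.
exact: l.
Qed.

Lemma dist_sym_le x y : dist y x <= dist x y.
Proof.
have [s [<- p <-]] := dist_walk x y.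
elim: s x p => [|z s IH] x /=; first by rewrite dist0.
move=> /andP[exz pz].
apply: leq_trans (dist_tri _ z _) _.
have h1 := IH z pz.
have h2 : dist z x <= 1 by rewrite -(dist0 z) -addn1; apply: dist_edge_r; rewrite e_sym.
lia.
Qed.

Lemma dist_sym x y : dist x y = dist y x.
Proof. by apply/eqP; rewrite eqn_leq !dist_sym_le. Qed.

Lemma walk_le (z : T) (W : seq T) p q : path e z W -> p <= q -> q <= size W ->
  dist (nth z (z :: W) p) (nth z (z :: W) q) <= q - p.
Proof.
move=> pW; elim: q => [|q IH] pq qW.
  by move: pq; rewrite leqn0 => /eqP ->; rewrite dist0.
move: pq; rewrite leq_eqVlt => /orP[/eqP ->|pq]; first by rewrite dist0.
have := IH pq (ltnW qW).
have ed := (pathP z pW) q qW.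
have := dist_edge_r (nth z (z :: W) p) ed.
rewrite [nth z (z :: W) q.+1]/=; lia.
Qed.

Lemma geo_dist z W p q : path e z W -> dist z (last z W) = size W -> p <= q -> q <= size W ->
  dist (nth z (z::W) p) (nth z (z::W) q) = q - p.
Proof.
move=> pW dW pq qW; apply/eqP; rewrite eqn_leq walk_le //=.
have h1 := walk_le pW (leq0n p) (leq_trans pq qW).
have h2 := walk_le pW qW (leqnn _).
have hl : nth z (z :: W) (size W) = last z W by rewrite (nth_last z (z :: W)).
rewrite hl /= in h2.
have t1 := dist_tri z (nth z (z :: W) p) (last z W).
have t2 := dist_tri (nth z (z :: W) p) (nth z (z :: W) q) (last z W).
move: h1; rewrite [nth z (z::W) 0]/= => h1.
lia.
Qed.

Lemma geo_iso z W : path e z W -> dist z (last z W) = size W -> isometric_path e (z :: W).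
Proof.
move=> pW dW; have uW : uniq (z :: W).
  apply/(uniqP z) => i j; rewrite !inE /= !ltnS => hi hj eqij.
  case: (ltngtP i j) => // lt.
    by have := geo_dist pW dW (ltnW lt) hj; rewrite eqij dist0; lia.
  by have := geo_dist pW dW (ltnW lt) hi; rewrite eqij dist0; lia.
split => //= x0 i j hi hj.
rewrite (set_nth_default z) // (set_nth_default z x0) //.
rewrite ltnS in hi hj.
case: ifP => ij.
  rewrite -(geo_dist pW dW ij) //. exact: is_dist_dist.
have ji : j <= i by rewrite leqNgt; apply/negP => /ltnW; rewrite ij.
rewrite -(geo_dist pW dW ji) //.
rewrite dist_sym; exact: is_dist_dist.
Qed.

End Dist.

Lemma last_take' (T : Type) (W : seq T) z n : n <= size W -> last z (take n W) = nth z (z :: W) n.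
Proof.
elim: W z n => [|w W IH] z n; first by case: n.
case: n => [|n] /=; first by []. by move=> hn; rewrite IH //; apply: set_nth_default.
Qed.

Lemma path_take (T : Type) (e : rel T) x s n : path e x s -> path e x (take n s).
Proof. by rewrite -{1}(cat_take_drop n s) cat_path => /andP[]. Qed.

Lemma path_drop (T : Type) (e : rel T) z W n : path e z W -> path e (nth z (z::W) n) (drop n W).
Proof.
case: (leqP n (size W)) => hn.
  by rewrite -{1}(cat_take_drop n W) cat_path last_take' // => /andP[].
by rewrite drop_oversize // ltnW.
Qed.

Lemma last_ne (T : Type) (s : seq T) x y : 0 < size s -> last x s = last y s.
Proof. by case: s. Qed.

Lemma last_drop (T : Type) (s : seq T) x y n : n < size s -> last x (drop n s) = last y s.
Proof.
move=> hn; rewrite -{2}(cat_take_drop n s) last_cat; apply: last_ne.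
by rewrite size_drop; lia.
Qed.

Lemma onth_nth' (T : Type) (s : seq T) x0 i : i < size s -> onth s i = Some (nth x0 s i).
Proof.
elim: s i => [|y s IH] i; first by case: i.
case: i => [|i] /=; first by []. by move=> hi; rewrite IH.
Qed.

Section PathP.
Variables (T : finType) (e : rel T).
Hypothesis e_sym : symmetric e.
Hypothesis conn : forall x y : T, connect e x y.
Variables (p0 : T) (P' : seq T).
Local Notation P := (p0 :: P').
Hypothesis P_iso : isometric_path e P.
Hypothesis P_bf : bypath_free e P.
Local Notation K := (size P').
Local Notation vK := (last p0 P').
Local Notation d := (dist conn).

Lemma Ppath : path e p0 P'.
Proof. by case: P_iso => _ /(_ p0). Qed.
Lemma Puniq : uniq P.
Proof. by case: P_iso. Qed.

Lemma Pdist i j : i <= j -> j <= K -> d (nth p0 P i) (nth p0 P j) = j - i.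
Proof.
move=> ij jK; case: P_iso => _ _ _ /(_ p0 i j).
rewrite ij => H; apply/esym/is_dist_eq; apply: H; rewrite /= ltnS //; exact: leq_trans ij jK.
Qed.

Lemma nthK : nth p0 P K = vK.
Proof. by rewrite (nth_last p0 P). Qed.

Lemma d0K : d p0 vK = K.
Proof. by have := Pdist (leq0n K) (leqnn K); rewrite nthK subn0. Qed.

Lemma d0j j : j <= K -> d p0 (nth p0 P j) = j.
Proof. by move=> jK; have := Pdist (leq0n j) jK; rewrite subn0. Qed.

Lemma djK j : j <= K -> d (nth p0 P j) vK = K - j.
Proof. by move=> jK; have := Pdist jK (leqnn K); rewrite nthK. Qed.

Lemma no_geo x : x \notin P -> d p0 x + d x vK = K -> False.
Proof.
move=> xP dsum.
have [s1 [hs1 p1 l1]] := dist_walk conn p0 x.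
have [s2 [hs2 p2 l2]] := dist_walk conn x vK.
set W := s1 ++ s2.
have pW : path e p0 W by rewrite cat_path p1 l1.
have lW : last p0 W = vK by rewrite last_cat l1.
have sW : size W = K by rewrite size_cat hs1 hs2.
have dW : d p0 (last p0 W) = size W by rewrite lW sW d0K.
set S := p0 :: W.
set m := d p0 x.
have Sx : nth p0 S m = x.
  rewrite /m -hs1 /S /W -cat_cons nth_cat /= ltnSn.
  by have := nth_last p0 (p0 :: s1); rewrite /= l1.
have [_ _ uS _] := geo_iso e_sym pW dW.
have geo := geo_dist pW dW.
have SinP p : p <= K -> nth p0 S p \in P -> nth p0 S p = nth p0 P p.
  move=> pK inP; set j := index (nth p0 S p) P.
  have jl : j < size P by rewrite index_mem.
  have nj := nth_index p0 inP.
  have dp : d p0 (nth p0 S p) = p.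
    by have := geo 0 p (leq0n p); rewrite sW subn0 => /(_ pK).
  have dj : d p0 (nth p0 P j) = j by apply: d0j; rewrite -ltnS.
  rewrite nj dp in dj.
  by rewrite {2}dj /j nj.
have SK : nth p0 S K = vK by rewrite -sW (nth_last p0 S) /= lW.
have mK : m <= K by rewrite /m; lia.
have exP : exists i, (fun i => (i <= m) && (nth p0 S i \in P)) i.
  by exists 0; rewrite leq0n /= mem_head.
have ubP : forall i, (fun i => (i <= m) && (nth p0 S i \in P)) i -> i <= m.
  by move=> i /andP[].
case: (ex_maxnP exP ubP) => i /andP[im iP] imax.
have exQ : exists j, (fun j => (m <= j <= K) && (nth p0 S j \in P)) j.
  by exists K; rewrite mK leqnn SK mem_last.
case: (ex_minnP exQ) => j /andP[/andP[mj jK] jP] jmin.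
have im' : i < m.
  rewrite ltn_neqAle im andbT; apply/eqP => eim; move: iP; rewrite eim Sx.
  by rewrite (negbTE xP).
have mj' : m < j.
  rewrite ltn_neqAle mj andbT; apply/eqP => ejm; move: jP; rewrite -ejm Sx.
  by rewrite (negbTE xP).
have notin l : i < l -> l < j -> nth p0 S l \notin P.
  move=> il lj; apply/negP => lP; case: (leqP l m) => lm.
    by have := imax l; rewrite lm lP => /(_ isT); lia.
  by have := jmin l; rewrite (ltnW lm) lP (leq_trans (ltnW lj) jK) => /(_ isT); lia.
have Si := SinP i (leq_trans im mK) iP.
have Sj := SinP j jK jP.
set q := take (j - i.+1) (drop i.+1 S).
have sq : size q = j - i.+1 by rewrite size_takel // size_drop /S /= sW; lia.
have pq : path e (nth p0 P i) (rcons q (nth p0 P j)).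
  rewrite -Si -Sj.
  have hd : nth p0 (drop i.+1 S) (j - i.+1) = nth p0 S j.
    by rewrite nth_drop; congr nth; lia.
  rewrite -hd /q -take_nth; last by rewrite size_drop /S /= sW; lia.
  apply: path_take; exact: path_drop.
apply: P_bf; exists i, j, (nth p0 P i), (nth p0 P j), q; split.
- lia.
- apply: onth_nth'; rewrite /= ltnS; lia.
- apply: onth_nth'; rewrite /= ltnS; lia.
- by rewrite -size_eq0 sq; lia.
split => //.
- exact/take_uniq/drop_uniq.
- apply/(all_nthP p0) => l hl; rewrite sq in hl.
  rewrite nth_take // nth_drop; apply: notin; lia.
have -> : take i.+1 P = p0 :: take i P' by [].
rewrite cat_cons; apply: (geo_iso e_sym).
  rewrite cat_path path_take ?Ppath //= last_take'; last by lia.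
  move: pq; rewrite rcons_path cat_path => /andP[-> /= hl].
  rewrite (drop_nth p0); last by rewrite /= ltnS.
  by rewrite /= hl /=; apply: path_drop; exact: Ppath.
rewrite !last_cat (@last_drop _ _ _ p0); last by rewrite /= ltnS.
rewrite /= d0K !size_cat size_takel; last by lia.
by rewrite sq size_drop /=; lia.
Qed.

End PathP.

Section Game.
Variables (T : finType) (e : rel T).
Hypothesis e_sym : symmetric e.
Hypothesis conn : forall x y : T, connect e x y.
Variables (p0 : T) (P' : seq T).
Local Notation P := (p0 :: P').
Hypothesis P_iso : isometric_path e P.
Hypothesis P_bf : bypath_free e P.
Local Notation K := (size P').
Local Notation vK := (last p0 P').
Local Notation d := (dist conn).

Definition fa x := K - d x vK.
Definition fb x := minn (d p0 x) K.

Lemma ab_le x : fa x <= fb x.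
Proof.
have := dist_tri conn p0 x vK; rewrite (d0K conn P_iso) /fa /fb; lia.
Qed.

Lemma fbK x : fb x <= K.
Proof. rewrite /fb; lia. Qed.

Lemma ab_edge x y : e x y -> fa y <= fa x + 1 /\ fb y <= fb x + 1.
Proof.
move=> exy; have h1 := dist_edge_l conn vK exy.
have h2 := dist_edge_r conn p0 exy.
rewrite /fa /fb; lia.
Qed.

Lemma ab_nth j : j <= K -> fa (nth p0 P j) = j /\ fb (nth p0 P j) = j.
Proof.
move=> jK; rewrite /fa /fb (djK conn P_iso jK) (d0j conn P_iso jK); lia.
Qed.

Lemma key x : 0 < K -> fa x = fb x -> x = nth p0 P (fa x).
Proof.
move=> K0 hab; case: (boolP (x \in P)) => xP.
  have jl : index x P < size P by rewrite index_mem.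
  have nj := nth_index p0 xP.
  have jK : index x P <= K by rewrite -ltnS.
  have [ha _] := ab_nth jK.
  by rewrite nj in ha; rewrite ha nj.
exfalso; apply: (@no_geo _ _ e_sym conn _ _ P_iso P_bf _ xP).
have n1 : d p0 x != 0.
  by apply/eqP => /dist0_eq h; move: xP; rewrite -h mem_head.
have n2 : d x vK != 0.
  by apply/eqP => /dist0_eq h; move: xP; rewrite h mem_last.
move: hab; rewrite /fa /fb; lia.
Qed.

Definition stepi c x := if c < fa x then c.+1 else if fb x < c then c.-1 else c.

Lemma stepiE c x : (c < fa x /\ stepi c x = c.+1) \/
  (fa x <= c /\ fb x < c /\ stepi c x = c.-1) \/ ((fa x <= c <= fb x) /\ stepi c x = c).
Proof.
rewrite /stepi; case: (ltnP c (fa x)) => h1; first by left.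
case: (ltnP (fb x) c) => h2; first by right; left.
by right; right; split => //; apply/andP.
Qed.

Definition strat : cop_strategy T 1 :=
  CopStrategy [ffun _ => p0]
    (fun h => let l := last ([ffun _ => p0], p0) h in
       [ffun _ => nth p0 P (stepi (index (l.1 ord0) P) l.2)]).

Section Run.
Variable r : nat -> T.

Lemma last_hist t y : last y (history strat r t) = (cop_pos strat r t, r t).
Proof.
rewrite /cop_pos; case: t => [|t] //=.
by rewrite !last_rcons.
Qed.

Lemma cop_S t : cop_pos strat r t.+1 =
  [ffun _ => nth p0 P (stepi (index (cop_pos strat r t ord0) P) (r t))].
Proof. by rewrite {1}/cop_pos /= last_rcons /= last_hist. Qed.

Definition ci t := index (cop_pos strat r t ord0) P.

Lemma ci_inv t : ci t <= K /\ forall i, cop_pos strat r t i = nth p0 P (ci t).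
Proof.
have uP := Puniq P_iso.
elim: t => [|t [IH1 IH2]].
  by rewrite /ci /cop_pos /= !ffunE /= eqxx; split => // i; rewrite ffunE.
have hs : stepi (ci t) (r t) < size P.
  have := ab_le (r t); have := fbK (r t).
  case: (stepiE (ci t) (r t)) => [[h1 ->]|[[h1 [h2 ->]]|[h1 ->]]] /=; lia.
rewrite /ci cop_S ffunE index_uniq //; split; first by rewrite -ltnS.
by move=> i; rewrite ffunE.
Qed.

Lemma cop_posE t i : cop_pos strat r t i = nth p0 P (ci t).
Proof. by case: (ci_inv t) => _ ->. Qed.

Lemma ciK t : ci t <= K.
Proof. by case: (ci_inv t). Qed.

Lemma ci_S t : ci t.+1 = stepi (ci t) (r t).
Proof.
rewrite {1}/ci cop_S ffunE index_uniq ?(Puniq P_iso) //.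
have := ab_le (r t); have := fbK (r t); have := ciK t.
case: (stepiE (ci t) (r t)) => [[h1 ->]|[[h1 [h2 ->]]|[h1 ->]]] /=; lia.
Qed.


Hypothesis rw : robber_walk e r.

Lemma ABstep t : [/\ fa (r t.+1) <= fa (r t) + 1, fa (r t) <= fa (r t.+1) + 1,
  fb (r t.+1) <= fb (r t) + 1 & fb (r t) <= fb (r t.+1) + 1].
Proof.
case: (rw t) => [->|h]; first by split; lia.
have [h1 h2] := ab_edge h.
have [h3 h4] := ab_edge (h : e (r t) (r t.+1)); rewrite e_sym in h.
have [h5 h6] := ab_edge h.
split; lia.
Qed.

Lemma capt u : 0 < K -> fa (r u) = fb (r u) -> ci u.+1 = fa (r u) -> caught strat r u.+1.
Proof.
move=> K0 hab hc; exists ord0; right; split => //=.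
by rewrite cop_posE hc -key.
Qed.

Lemma free_le t n : free strat r t -> n <= t -> free strat r n.
Proof. by move=> f nt u un; apply: f; exact: leq_trans un nt. Qed.

Lemma leis t0 : free strat r (t0 + K.+1) ->
  exists u, t0 <= u < t0 + K.+1 /\ ci u.+1 = ci u.
Proof.
move=> ft.
case: (boolP [exists u : 'I_K.+1, ci (t0 + u).+1 == ci (t0 + u)]).
  move=> /existsP [u /eqP hu]; exists (t0 + u); split => //.
  by rewrite leq_addr /= ltn_add2l ltn_ord.
move=> /existsPn H.
have Hm m : m < K.+1 -> ci (t0 + m).+1 != ci (t0 + m) by move=> hm; exact: (H (Ordinal hm)).
have nc m : m <= K.+1 -> ~ caught strat r (t0 + m).
  by move=> hm; apply: ft; rewrite leq_add2l.
have mv u : ci u.+1 != ci u -> ci u < fa (r u) \/ (fa (r u) <= ci u /\ fb (r u) < ci u).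
  rewrite ci_S; case: (stepiE (ci u) (r u)) => [[h1 ->]|[[h1 [h2 ->]]|[h1 ->]]].
  - by left.
  - by right.
  - by rewrite eqxx.
have ABu u := ab_le (r u).
have BK u := fbK (r u).
have cKu u := ciK u.
have cSu u := ci_S u.
have Rd u : ci u < fa (r u) -> ci u.+1 = (ci u).+1.
  by move=> h; rewrite ci_S; case: (stepiE (ci u) (r u)) => [[h1 ->]|[[h1 [h2 ->]]|[h1 ->]]] //; lia.
have Ld u : fa (r u) <= ci u -> fb (r u) < ci u -> ci u.+1 = (ci u).-1.
  by move=> h h'; rewrite ci_S; case: (stepiE (ci u) (r u)) => [[h1 ->]|[[h1 [h2 ->]]|[h1 ->]]] //; lia.
have := Hm 0 isT; rewrite addn0 => /mv [R0|[L1 L2]]; last first.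
  have Lall m : m < K.+1 -> fa (r (t0 + m)) <= ci (t0 + m) /\ fb (r (t0 + m)) < ci (t0 + m).
    elim: m => [|m IH] hm; first by rewrite addn0.
    have [i1 i2] := IH (ltnW hm).
    have := mv _ (Hm _ hm); rewrite [t0 + m.+1]addnS => -[h|//].
    exfalso; apply: (nc m.+1 (ltnW hm)); rewrite [t0 + m.+1]addnS.
    have := Ld _ i1 i2; have := ABstep (t0 + m); have := ABu (t0 + m); have := cKu (t0 + m).
    move=> ? ? [? ? ? ?] hc.
    apply: capt; try lia.
  have cm m : m <= K.+1 -> ci (t0 + m) + m = ci t0.
    elim: m => [|m IH] hm; first by rewrite !addn0.
    have [i1 i2] := Lall m hm.
    have := Ld _ i1 i2; rewrite [t0 + m.+1]addnS => ->.
    have := IH (ltnW hm); lia.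
  have := cm K.+1 (leqnn _); have := cKu t0; lia.
have Rall m : m < K.+1 -> ci (t0 + m) < fa (r (t0 + m)).
  elim: m => [|m IH] hm; first by rewrite addn0.
  have i1 := IH (ltnW hm).
  have := mv _ (Hm _ hm); rewrite [t0 + m.+1]addnS => -[//|[h h']].
  exfalso; apply: (nc m.+1 (ltnW hm)); rewrite [t0 + m.+1]addnS.
  have := Rd _ i1; have := ABstep (t0 + m); have := ABu (t0 + m); have := cKu (t0 + m).
  have := ABu (t0 + m).+1.
  move=> ? ? ? [? ? ? ?] hc.
  apply: capt; try lia.
have cm m : m <= K.+1 -> ci (t0 + m) = ci t0 + m.
  elim: m => [|m IH] hm; first by rewrite !addn0.
  have := Rd _ (Rall m hm); rewrite [t0 + m.+1]addnS => ->.
  have := IH (ltnW hm); lia.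
have := cm K.+1 (leqnn _); have := cKu (t0 + K.+1); lia.
Qed.

End Run.

Lemma Padj j : j < K -> e (nth p0 P j) (nth p0 P j.+1).
Proof. by move=> hj; have := (pathP p0 (Ppath P_iso)) j hj. Qed.

Lemma main_game : leisurely_guardable e 1 [set x | x \in P].
Proof.
exists (strat), K.+1; split; last first.
  move=> r rw t0 ft; have [u [hu cu]] := leis rw ft.
  by exists u; split => //; exists ord0; rewrite !cop_posE cu.
move=> r rw; split.
  move=> t _ i; rewrite !cop_posE ci_S.
  have := ciK r t.
  case: (stepiE (ci r t) (r t)) => [[h1 ->]|[[h1 [h2 ->]]|[h1 ->]]] hK.
  - right; apply: Padj; have := ab_le (r t); have := fbK (r t); lia.
  - right; have -> : ci r t = (ci r t).-1.+1 by lia.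
    rewrite e_sym -pred_Sn; apply: Padj; lia.
  - by left.
exists K.+1 => t Nt ft; split.
  by move=> i; rewrite inE cop_posE mem_nth // ltnS ciK.
rewrite inE => rP.
have [u [hu cu]] := leis rw (t0 := 0) (free_le ft Nt).
have st : fa (r u) <= ci r u.+1 <= fb (r u).
  move: cu; rewrite ci_S.
  case: (stepiE (ci r u) (r u)) => [[h1 ->]|[[h1 [h2 ->]]|[h1 ->]]] //; lia.
have inv n : fa (r (u + n)) <= ci r (u + n).+1 <= fb (r (u + n)).
  elim: n => [|n IH]; first by rewrite addn0.
  rewrite addnS ci_S.
  have := ABstep rw (u + n); have := ab_le (r (u + n).+1).
  case: (stepiE (ci r (u + n).+1) (r (u + n).+1)) => [[h1 ->]|[[h1 [h2 ->]]|[h1 ->]]] //.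
    move=> ? [? ? ? ?]; lia.
  move=> ? [? ? ? ?]; lia.
have := inv (t - u); rewrite subnKC; last by lia.
set j := index (r t) P.
have jK : j <= K by rewrite -ltnS index_mem.
have nj : nth p0 P j = r t by apply: nth_index.
have [ha hb] := ab_nth jK; rewrite nj in ha hb; rewrite ha hb => hc.
exists ord0; rewrite cop_posE -nj; congr nth; lia.
Qed.

End Game.

Theorem lemma4p1 (T : finType) (e : rel T)
    (e_sym : symmetric e) (e_irr : irreflexive e)
    (G_conn : forall x y : T, connect e x y)
    (P : seq T) (P_iso : isometric_path e P) (P_bf : bypath_free e P) :
  leisurely_guardable e 1 [set x | x \in P].
Proof.
case: P P_iso P_bf => [|p0 P'] P_iso P_bf; first by case: P_iso.
exact: (main_game e_sym G_conn P_iso P_bf).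
Qed.
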